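(* For every $\lambda>2$ there exist: the spaces $X_1=X_2=X_3=\{0,1\}$, the uniform probability measures $\nu_i$ on $X_i$, constants $0<m<M$ with $M/m=\lambda$, and a consistent family of probability measures $\mu_{12},\mu_{13},\mu_{23}$ on $X_i\times X_j$ with densities $\rho_{ij}=d\mu_{ij}/d(\nu_i\otimes\nu_j)$ satisfying $m\le\rho_{ij}\le M$, such that $\Pi(\mu_{12},\mu_{13},\mu_{23})$ is empty. (Hence the constant $\lambda_{32}$ in the density condition for $n=3$, $k=2$ cannot exceed $2$.)
   Context: A family $\mu_{12},\mu_{13},\mu_{23}$ of probability measures on $X_1\times X_2$, $X_1\times X_3$, $X_2\times X_3$ is consistent if any two of them have the same one-dimensional marginal on their common coordinate. $\Pi(\mu_{12},\mu_{13},\mu_{23})$ is the set of probability measures $\mu$ on $X_1\times X_2\times X_3$ whose projection onto $X_i\times X_j$ equals $\mu_{ij}$ for all $1\le i<j\le3$. The density condition: for given $\lambda$, whenever a consistent family has densities w.r.t. $\nu_i\otimes\nu_j$ bounded between $m$ and $M$ with $M/m\le\lambda$, a uniting measure exists. *)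

(* Defs.v *)
(* finite probability spaces X_i = {0,1} modelled by bool;
   a probability measure on a finite product of bools is its mass function. *)
From HB Require Import structures.
From mathcomp Require Import all_boot all_order all_algebra.
From mathcomp Require Import reals.
Set Implicit Arguments. Unset Strict Implicit. Unset Printing Implicit Defensive.
Import Order.TTheory GRing.Theory Num.Theory.
Local Open Scope ring_scope.

Section Defs.
Variable R : realType.

Definition prob2 (mu : bool -> bool -> R) : Prop :=
  (forall a b, 0 <= mu a b) /\ \sum_(a : bool) \sum_(b : bool) mu a b = 1.

Definition prob3 (mu : bool -> bool -> bool -> R) : Prop :=
  (forall a b c, 0 <= mu a b c) /\
  \sum_(a : bool) \sum_(b : bool) \sum_(c : bool) mu a b c = 1.

Definition nu (a : bool) : R := 1 / 2.

Definition density (mu : bool -> bool -> R) (a b : bool) : R :=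
  mu a b / (nu a * nu b).

Definition consistent (m12 m13 m23 : bool -> bool -> R) : Prop :=
  (forall a, \sum_(b : bool) m12 a b = \sum_(c : bool) m13 a c) /\
  (forall b, \sum_(a : bool) m12 a b = \sum_(c : bool) m23 b c) /\
  (forall c, \sum_(a : bool) m13 a c = \sum_(b : bool) m23 b c).

Definition inPi (m12 m13 m23 : bool -> bool -> R)
  (mu : bool -> bool -> bool -> R) : Prop :=
  prob3 mu /\
  (forall a b, \sum_(c : bool) mu a b c = m12 a b) /\
  (forall a c, \sum_(b : bool) mu a b c = m13 a c) /\
  (forall b c, \sum_(a : bool) mu a b c = m23 b c).

End Defs.

(* Main.v *)
Require Import Defs.
From HB Require Import structures.
From mathcomp Require Import all_boot all_order all_algebra.
From mathcomp Require Import reals.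
From mathcomp Require Import ring lra.
Import Order.TTheory GRing.Theory Num.Theory.
Local Open Scope ring_scope.

Lemma aux (R : realType) (q : R) (mu : bool -> bool -> bool -> R) :
  mu true true true + mu true true false +
    (mu true false true + mu true false false) +
    (mu false true true + mu false true false +
     (mu false false true + mu false false false)) = 1 ->
  2 * q < 1 - q ->
  mu true false true + mu true false false = (1 - q) / 2 ->
  mu false true true + mu false true false = (1 - q) / 2 ->
  mu true true false + mu true false false = (1 - q) / 2 ->
  mu false true true + mu false false true = (1 - q) / 2 ->
  mu true true false + mu false true false = (1 - q) / 2 ->
  mu true false true + mu false false true = (1 - q) / 2 ->
  0 <= mu true true true -> 0 <= mu false false false -> False.
Proof.
move: (mu true true true) (mu true true false) (mu true false true) (mu true false false)
  (mu false true true) (mu false true false) (mu false false true) (mu false false false).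
move=> t1 t2 t3 t4 t5 t6 t7 t8 *; lra.
Qed.

Theorem mainTheorem3 (R : realType) (lam : R) : 2 < lam ->
  exists m M : R, [/\ 0 < m, m < M & M / m = lam] /\
  exists m12 m13 m23 : bool -> bool -> R,
    [/\ prob2 m12, prob2 m13, prob2 m23 & consistent m12 m13 m23] /\
    (forall a b, m <= density m12 a b <= M) /\
    (forall a c, m <= density m13 a c <= M) /\
    (forall b c, m <= density m23 b c <= M) /\
    ~ (exists mu : bool -> bool -> bool -> R, inPi m12 m13 m23 mu).
Proof.
move=> hl.
have l1 : 0 < 1 + lam by lra.
set q := 1 / (1 + lam).
have hq : 0 < q by rewrite /q divr_gt0.
have hpq : lam * q = 1 - q.
  rewrite /q; field; lra.
set p := 1 - q.
have hp2 : 2 * q < p.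
  have : 0 < (lam - 2) * q by rewrite mulr_gt0 // subr_gt0.
  rewrite mulrBl hpq /p; lra.
exists (2 * q), (2 * p); split.
  split; try lra.
  rewrite /p -hpq; field; lra.
pose mm := fun a b : bool => if a == b then q / 2 else p / 2.
have P2 : prob2 mm.
  split; first by case; case; rewrite /mm /=; lra.
  rewrite !big_bool /mm /=; rewrite /p; lra.
have D : forall a b, 2 * q <= density mm a b <= 2 * p.
  move=> a b; rewrite /density /nu /mm.
  have -> : 1 / 2 * (1 / 2) = 1/4 :> R by field.
  case: (a == b); apply/andP; split.
  - have -> : q / 2 / (1/4) = 2 * q by field.
    lra.
  - have -> : q / 2 / (1/4) = 2 * q by field.
    lra.
  - have -> : p / 2 / (1/4) = 2 * p by field.
    lra.
  - have -> : p / 2 / (1/4) = 2 * p by field.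
    lra.
exists mm, mm, mm; split; first split.
  1-3: exact: P2. split; last split; move=> x; rewrite !big_bool /mm; case: x => /=; lra.
do 3 (split; first exact: D).
case=> mu [[hpos hsum] [h12 [h13 h23]]].
move: hsum; rewrite !big_bool /= => hsum.
have a1 := h12 true false; have a2 := h12 false true.
have b1 := h13 true false; have b2 := h13 false true.
have c1 := h23 true false; have c2 := h23 false true.
move: a1 a2 b1 b2 c1 c2; rewrite /mm !big_bool /= => a1 a2 b1 b2 c1 c2.
have := hpos true true true; have := hpos false false false.
have := hpos true true false; have := hpos true false true.
have := hpos false true true; have := hpos false false true.
have := hpos false true false; have := hpos true false false.
rewrite /p in hp2 a1 a2 b1 b2 c1 c2.
clear h12 h13 h23 D P2 hpq hpos mm p.
clearbody q.
move=> _ _ _ _ _ _ h8 h1.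
exact: (@aux R q mu hsum hp2 a1 a2 b1 b2 c1 c2 h1 h8).
Qed.
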